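(* Let $q\ge 2$ be a prime power, $m\ge1$, $n=q^m-1=r_1r_2$ with $r_1,r_2>1$, $\gcd(r_1,r_2)=1$, and let $a$ be the multiplicative order of $q$ modulo $r_1$. Fix a generator $\alpha$ of $\mathbb{F}_{q^m}^*$ and a group isomorphism $T:\mathbb{Z}_n\to\mathbb{Z}_{r_1}\times\mathbb{Z}_{r_2}$, and let $\Gamma=\{(i_1,i_2)\in\mathbb{Z}_{r_1}\times\mathbb{Z}_{r_2}\mid 0\le i_1<a,\ 0\le i_2<m/a\}$. Then the set $\{0\}\cup\{\alpha^i\mid i\in T^{-1}(\Gamma)\}\subseteq\mathbb{F}_{q^m}$ is an information set for $R_q(1,m)$, and the set $\{\alpha^i\mid i\in\mathbb{Z}_n,\ i\notin T^{-1}(\Gamma)\}$ is an information set for $R_q(m(q-1)-2,m)$.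
   Context: $\mathbb{F}=\mathbb{F}_q$; elements of $\mathbb{Z}_r$ are identified with integers $0,\dots,r-1$. The $q$-weight $\mathrm{wt}_q(k)$ of a natural number $k$ is the sum of its digits in base $q$. Let $G$ be the additive group of $\mathbb{F}_{q^m}$; words of length $q^m$ are vectors in $\mathbb{F}^G$, written $bX^0+\sum_{i=0}^{n-1}a_iX^{\alpha^i}$ (coordinates indexed by $0$ and by $\alpha^i$, $0\le i<n$). For $0<\rho\le m(q-1)$, the generalized Reed–Muller code $R_q(\rho,m)$ consists of the words with $b\cdot0^s+\sum_{i}a_i\alpha^{is}=0$ for every $0\le s<q^m-1$ with $\mathrm{wt}_q(s)<m(q-1)-\rho$ (with $0^0=1$). For a linear code $C$ of dimension $k$ on coordinate set $P$, an information set is $I\subseteq P$ with $|I|=k$ such that projection of $C$ onto $I$ is onto $\mathbb{F}^k$. *)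

(* Defs.v *)
From HB Require Import structures.
From mathcomp Require Import all_boot all_order all_algebra all_field.
Set Implicit Arguments. Unset Strict Implicit. Unset Printing Implicit Defensive.
Import GRing.Theory.
Local Open Scope ring_scope.

Fixpoint digsum (q k fuel : nat) : nat :=
  match fuel with
  | 0 => 0%N
  | f.+1 => (k %% q + digsum q (k %/ q) f)%N
  end.

(* q-weight wt_q(k) : sum of the base-q digits of k (for q >= 2) *)
Definition wt_q (q k : nat) : nat := digsum q k k.

Section RM.
Variable L : finFieldType.

(* the subfield F_q of L = F_{q^m} : elements fixed by x |-> x^q *)
Definition Fq (q : nat) : {set L} := [set x : L | x ^+ q == x].

(* Generalized Reed-Muller code R_q(rho, m): words (functions from the
   coordinate set G = F_{q^m} to F_q) satisfying, for every
   0 <= s < q^m - 1 with wt_q s < m(q-1) - rho, the check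
   b*0^s + sum_i a_i alpha^(i s) = sum_{x in F_{q^m}} w(x) x^s = 0
   (with 0^0 = 1, which is mathcomp's convention 0 ^+ 0 = 1). *)
Definition RM_code (q m rho : nat) : {set {ffun L -> L}} :=
  [set w : {ffun L -> L} |
     [forall x, w x \in Fq q] &&
     [forall s : 'I_(q ^ m).-1,
        (wt_q q s < m * (q - 1) - rho)%N ==> (\sum_(x : L) w x * x ^+ s == 0)]].

(* dimension k of an F_q-linear code C : |C| = q^k *)
Definition code_dim (q : nat) (C : {set {ffun L -> L}}) : nat :=
  trunc_log q #|C|.

Definition info_set (q : nat) (C : {set {ffun L -> L}}) (I : {set L}) : Prop :=
  #|I| = code_dim q C /\
  forall f : L -> L, (forall x, x \in I -> f x \in Fq q) ->
    exists2 c, c \in C & forall x, x \in I -> c x = f x.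
End RM.

(* Main.v *)
Require Import Defs.
From HB Require Import structures.
From mathcomp Require Import all_boot all_order all_algebra all_field all_solvable.
From mathcomp Require Import zify ring.
Set Implicit Arguments. Unset Strict Implicit. Unset Printing Implicit Defensive.
Import GRing.Theory.
Section Wt.
Variable q : nat.
Hypothesis q2 : (1 < q)%N.

Lemma digsum0 f : digsum q 0 f = 0%N.
Proof. by elim: f => //= f IH; rewrite mod0n div0n IH. Qed.

Lemma digsum_fuel_gen f1 : forall k f2, (k <= f1)%N -> (k <= f2)%N ->
  digsum q k f1 = digsum q k f2.
Proof.
elim: f1 => [|f1 IH] k f2.
  by rewrite leqn0 => /eqP -> _; rewrite !digsum0.
case: k => [|k] hk1 hk2; first by rewrite !digsum0.
case: f2 hk2 => [//|f2] hk2 /=.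
have hlt : (k.+1 %/ q < k.+1)%N by rewrite ltn_Pdiv.
by rewrite (IH _ f2) //; lia.
Qed.

Lemma wtE k : wt_q q k = (k %% q + wt_q q (k %/ q))%N.
Proof.
rewrite /wt_q; case: k => [|k]; first by rewrite mod0n div0n /=.
rewrite /=; congr (_ + _)%N; apply: digsum_fuel_gen => //.
have hlt : (k.+1 %/ q < k.+1)%N by rewrite ltn_Pdiv.
lia.
Qed.

Lemma wt_compl m k : (k < q ^ m)%N ->
  (wt_q q k + wt_q q (q ^ m - 1 - k))%N = (m * (q - 1))%N.
Proof.
elim: m k => [|m IH] k hk.
  rewrite expn0 in hk; have -> : k = 0%N by lia.
  by rewrite /wt_q.
have q0 : (0 < q)%N by lia.
rewrite (wtE k) (wtE (q ^ m.+1 - 1 - k)).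
have hk0 := ltn_pmod k q0; have hkE := divn_eq k q.
move: (k %% q)%N (k %/ q)%N hk0 hkE => k0 k1 hk0 hkE.
subst k.
have hk1 : (k1 < q ^ m)%N.
  rewrite ltnNge; apply/negP => h; have := leq_mul h (leqnn q).
  rewrite -expnSr; lia.
have hE : (q ^ m.+1 - 1 - (k1 * q + k0) = (q ^ m - 1 - k1) * q + (q - 1 - k0))%N.
  rewrite expnSr. move: (q ^ m)%N hk1 => Q hk1.
  have [t ->] : exists t, Q = (k1 + 1 + t)%N by exists (Q - 1 - k1)%N; lia.
  have -> : (k1 + 1 + t - 1 - k1 = t)%N by lia.
  rewrite !mulnDl mul1n.
  move: (k1 * q)%N (t * q)%N => A B. lia.
rewrite hE modnMDl divnMDl //.
rewrite (modn_small (_ : q - 1 - k0 < q)%N); last by lia.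
rewrite (divn_small (_ : q - 1 - k0 < q)%N); last by lia.
rewrite addn0.
have := IH k1 hk1. rewrite mulSn.
move: (wt_q q k1) (wt_q q (q ^ m - 1 - k1)) (m * (q-1))%N => A B C. lia.
Qed.

Lemma wt0 x : wt_q q x = 0%N -> x = 0%N.
Proof.
have q0 : (0 < q)%N by lia.
elim/ltn_ind: x => x IH; rewrite wtE => h.
have h1 : (x %% q = 0)%N by move: h; case: (x %% q)%N.
have h2 : wt_q q (x %/ q) = 0%N by move: h; rewrite h1.
case: (posnP x) => // xp.
have := IH (x %/ q)%N (ltn_Pdiv q2 xp) h2 => h3.
by rewrite (divn_eq x q) h1 h3.
Qed.

Lemma wt1 x : wt_q q x = 1%N -> exists j, x = (q ^ j)%N.
Proof.
elim/ltn_ind: x => x IH; rewrite wtE => h.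
case: (posnP x) h => [->|xp] h; first by rewrite mod0n div0n /wt_q in h.
have hd := divn_eq x q.
move: (x %% q)%N (x %/ q)%N h hd (IH (x %/ q)%N (ltn_Pdiv q2 xp)) => r d h hd IHd.
have [[h1 h2]|[h1 h2]] : ((r = 1 /\ wt_q q d = 0) \/ (r = 0 /\ wt_q q d = 1))%N.
  by move: (wt_q q d) h => w h; lia.
  have h3 := wt0 h2; exists 0%N.
  by rewrite hd h1 h3.
have [j hj] := IHd h2.
by exists j.+1; rewrite hd h1 hj addn0 expnSr.
Qed.

Lemma wt_exp j : wt_q q (q ^ j) = 1%N.
Proof.
elim: j => [|j IH].
  by rewrite expn0 wtE modn_small // divn_small // /wt_q.
by rewrite wtE expnS modnMr mulKn ?IH //; lia.
Qed.

End Wt.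

Local Open Scope ring_scope.

Section Fld.
Variables (L : finFieldType) (q m p k : nat).
Hypotheses (pcp : p \in [pchar L]) (k0 : (0 < k)%N) (qE : q = (p ^ k)%N)
  (m0 : (0 < m)%N) (HL : #|L| = (q ^ m)%N).

Lemma pp : prime p. Proof. exact: pcharf_prime pcp. Qed.
Lemma q2 : (1 < q)%N.
Proof.
rewrite qE; apply: (leq_trans (prime_gt1 pp)); rewrite -{1}(expn1 p).
by apply: leq_pexp2l; [exact: prime_gt0 pp|].
Qed.
Lemma q0 : (0 < q)%N. Proof. have := q2; lia. Qed.

Lemma qe_nat e : [pchar L].-nat (q ^ e)%N.
Proof.
rewrite qE -expnM pnatX (eq_pnat _ (pcharf_eq pcp)) pnat_id ?pp //.
Qed.

Lemma frobD e (x y : L) : (x + y) ^+ (q ^ e) = x ^+ (q ^ e) + y ^+ (q ^ e).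
Proof. exact: exprDn_pchar (qe_nat e). Qed.

Lemma frob0 e : (0 : L) ^+ (q ^ e) = 0.
Proof. by rewrite expr0n expn_eq0; have := q0; case: (q) => //. Qed.

Lemma frobN e (x : L) : (- x) ^+ (q ^ e) = - x ^+ (q ^ e).
Proof.
apply/eqP; rewrite -subr_eq0 opprK -frobD addNr frob0 //.
Qed.

Lemma frobB e (x y : L) : (x - y) ^+ (q ^ e) = x ^+ (q ^ e) - y ^+ (q ^ e).
Proof. by rewrite frobD frobN. Qed.

Lemma frob_sum e (I : Type) (r : seq I) (P : pred I) (G : I -> L) :
  (\sum_(i <- r | P i) G i) ^+ (q ^ e) = \sum_(i <- r | P i) G i ^+ (q ^ e).
Proof.
apply: (big_morph (fun x : L => x ^+ (q ^ e))); [exact: frobD | exact: frob0].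
Qed.

Lemma frob_card (x : L) : x ^+ (q ^ m) = x.
Proof. by rewrite -HL expf_card. Qed.

Lemma natq0 : (q%:R : L) = 0.
Proof. by rewrite qE natrX (pcharf0 pcp) expr0n; case: (k) k0. Qed.

Lemma natN0 : ((q ^ m)%N%:R : L) = 0.
Proof. by rewrite natrX natq0 expr0n; case: (m) m0. Qed.

Local Notation F := (Fq L q).

Lemma inF (x : L) : (x \in F) = (x ^+ q == x).
Proof. by rewrite inE. Qed.

Lemma inF_pow x e : x \in F -> x ^+ (q ^ e) = x.
Proof.
rewrite inF => /eqP hx; elim: e => [|e IH]; first by rewrite expr1.
by rewrite expnSr exprM IH hx.
Qed.

Lemma F0 : (0 : L) \in F. Proof. by rewrite inF expr0n; case: (q) q2. Qed.
Lemma F1 : (1 : L) \in F. Proof. by rewrite inF expr1n. Qed.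
Lemma FD x y : x \in F -> y \in F -> x + y \in F.
Proof. move=> hx hy; rewrite inF -[q]expn1 frobD !inF_pow //. Qed.
Lemma FN x : x \in F -> - x \in F.
Proof. move=> hx; rewrite inF -[q]expn1 frobN !inF_pow //. Qed.
Lemma FB x y : x \in F -> y \in F -> x - y \in F.
Proof. by move=> hx hy; rewrite FD ?FN. Qed.
Lemma FM x y : x \in F -> y \in F -> x * y \in F.
Proof. by move=> hx hy; rewrite inF exprMn -[q]expn1 !inF_pow. Qed.
Lemma Fsum (I : Type) (r : seq I) (P : pred I) (G : I -> L) :
  (forall i, P i -> G i \in F) -> \sum_(i <- r | P i) G i \in F.
Proof.
move=> h; elim/big_ind: _ => //; [exact: F0 | exact: FD].
Qed.

Lemma N_gt1 : (1 < q ^ m)%N.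
Proof. by rewrite -{1}(expn0 q) ltn_exp2l ?q2. Qed.

Local Notation n := (q ^ m).-1.

Lemma n_gt0 : (0 < n)%N. Proof. have := N_gt1; lia. Qed.

Lemma predNE : (n.+1 = q ^ m)%N. Proof. have := N_gt1; lia. Qed.

Lemma sum_delta (w : L -> L) y : \sum_(x : L) w x * (x == y)%:R = w y.
Proof.
rewrite (bigD1 y) //= eqxx mulr1 big1 ?addr0 // => x /negbTE ->; by rewrite mulr0.
Qed.

Lemma delta_exp (x y : L) :
  (x == y)%:R = 1 - \sum_(i < q ^ m) y ^+ (n - i) * x ^+ i.
Proof.
have hs := subrXX y x (q ^ m); rewrite !frob_card in hs.
case: eqVneq => [<-|hxy] /=.
  rewrite (eq_bigr (fun _ => x ^+ n)); last first.
    move=> i _; rewrite -exprD subnK //; have := ltn_ord i; have := predNE; move: (nat_of_ord i) => j; lia.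
  by rewrite sumr_const card_ord -[_ *+ (q ^ m)%N]mulr_natr natN0 mulr0 subr0 ?mulr1.
have hyx : y - x != 0 by rewrite subr_eq0 eq_sym.
have : (y - x) * 1 = (y - x) * \sum_(i < q ^ m) y ^+ ((q ^ m).-1 - i) * x ^+ i.
  by rewrite mulr1 -hs.
by move/(mulfI hyx) => <-; rewrite subrr.
Qed.

Lemma expansion (w : L -> L) y :
  w y = \sum_(x : L) w x - \sum_(i < q ^ m) y ^+ (n - i) * \sum_(x : L) w x * x ^+ i.
Proof.
rewrite -{1}(sum_delta w y).
under eq_bigr => x _ do rewrite delta_exp mulrBr mulr1.
rewrite sumrB; congr (_ - _).
under eq_bigr => x _ do rewrite mulr_sumr.
rewrite exchange_big /=; apply: eq_bigr => i _.
by rewrite mulr_sumr; apply: eq_bigr => x _; rewrite mulrCA.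
Qed.

Variable alpha : L.
Hypothesis Halpha : n.-primitive_root alpha.

Lemma alpha_neq0 : alpha != 0.
Proof. by rewrite (prim_root_eq0 Halpha) -lt0n n_gt0. Qed.

Lemma power_sum e : (e == 0)%N || ~~ (n %| e)%N -> \sum_(x : L) x ^+ e = 0.
Proof.
case/orP => [/eqP ->|he].
  under eq_bigr => x _ do rewrite expr0.
  by rewrite sumr_const -mulr_natr mul1r HL natN0.
set S := \sum_(x : L) x ^+ e.
have h1 : S = alpha ^+ e * S.
  rewrite {1}/S (reindex_inj (mulfI alpha_neq0)) /= /S mulr_sumr.
  by apply: eq_bigr => x _; rewrite exprMn.
have h2 : alpha ^+ e != 1 by rewrite -(prim_order_dvd Halpha).
have : (alpha ^+ e - 1) * S = 0 by rewrite mulrBl mul1r -h1 subrr.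
by move/eqP; rewrite mulf_eq0 subr_eq0 (negbTE h2) /= => /eqP.
Qed.

Lemma RM1_check (w : {ffun L -> L}) s : w \in RM_code L q m 1 -> (s < n)%N ->
  (wt_q q s < m * (q - 1) - 1)%N -> \sum_(x : L) w x * x ^+ s = 0.
Proof.
rewrite inE => /andP [_ /forallP h] hs hwt.
by have := h (Ordinal hs); rewrite /= hwt /= => /eqP.
Qed.

Definition tau (w : L -> L) (i : nat) (y : L) :=
  (y ^+ (n - i) - 0 ^+ (n - i)) * \sum_(x : L) w x * x ^+ i.

Lemma tau_lin (w : {ffun L -> L}) (i : 'I_(q ^ m)) : w \in RM_code L q m 1 ->
  (forall y z, tau w i (y + z) = tau w i y + tau w i z) /\
  (forall c y, c \in F -> tau w i (c * y) = c * tau w i y).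
Proof.
move=> hw; rewrite /tau.
have hi : (i <= n)%N by have := ltn_ord i; have := predNE; move: (nat_of_ord i) => j; lia.
case: (ltnP i n) => hin; last first.
  have -> : (n - i = 0)%N by lia.
  by split => *; rewrite !expr0 subrr !mul0r ?mulr0 ?addr0.
case: (ltnP (wt_q q i) (m * (q - 1) - 1)) => hwt.
  by rewrite (RM1_check hw hin hwt); split => *; rewrite !mulr0 ?addr0.
have hc := wt_compl q2 (ltn_ord i).
have hni : (q ^ m - 1 - i = n - i)%N by rewrite subn1.
rewrite hni in hc.
have hw1 : wt_q q (n - i) = 1%N.
  have : wt_q q (n - i) != 0%N.
    by apply/negP => /eqP /(wt0 q2); lia.
  move: (wt_q q (n - i)) (wt_q q i) hc hwt => A B; lia.
have [j ->] := wt1 q2 hw1.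
rewrite frob0; split => [y z|c y hc']; rewrite !subr0.
  by rewrite frobD mulrDl.
by rewrite exprMn inF_pow // mulrA.
Qed.

Lemma C1_affine (w : {ffun L -> L}) : w \in RM_code L q m 1 ->
  (forall y z, w 0 - w (y + z) = (w 0 - w y) + (w 0 - w z)) /\
  (forall c y, c \in F -> w 0 - w (c * y) = c * (w 0 - w y)).
Proof.
move=> hw.
have hD : forall y, w 0 - w y = \sum_(i < q ^ m) tau w i y.
  move=> y; rewrite (expansion w 0) (expansion w y).
  have -> : forall a b c : L, (a - b) - (a - c) = c - b by move=> a b c; ring.
  rewrite -sumrB; apply: eq_bigr => i _.
  by rewrite /tau mulrBl.
split => [y z|c y hc]; rewrite !hD.
  by rewrite -big_split; apply: eq_bigr => i _; have [h _] := tau_lin i hw; rewrite h.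
by rewrite mulr_sumr; apply: eq_bigr => i _; have [_ h] := tau_lin i hw; rewrite h.
Qed.

Lemma card_F_le : (#|F| <= q)%N.
Proof.
pose P : {poly L} := 'X^q - 'X.
have hsz : size P = q.+1.
  rewrite /P size_addl ?size_polyXn // size_polyN size_polyX; have := q2; lia.
have hP : P != 0 by rewrite -size_poly_eq0 hsz.
have hr : all (root P) (enum F).
  apply/allP => x; rewrite mem_enum inF => /eqP hx.
  by rewrite /root /P hornerD hornerN hornerXn hornerX hx subrr.
have := max_poly_roots hP hr (enum_uniq _).
by rewrite hsz -cardE ltnS.
Qed.

Lemma dvd_q1_n : (q - 1 %| n)%N.
Proof.
have hq := q2.
rewrite -subn1 -eqn_mod_dvd; last by have := N_gt1; lia.
rewrite -modnXm.
have -> : (q %% (q - 1) = 1 %% (q - 1))%N.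
  by rewrite -{1}(subnK (ltnW hq)) modnDl.
by rewrite modnXm exp1n.
Qed.

Lemma card_F : #|F| = q.
Proof.
apply/eqP; rewrite eqn_leq card_F_le /=.
have hq := q2.
pose d := (n %/ (q - 1))%N.
have hdn : (d * (q - 1) = n)%N by rewrite divnK // dvd_q1_n.
have hd0 : (0 < d)%N by have := n_gt0; rewrite -hdn; case: (d).
pose g := fun i : 'I_(q - 1) => alpha ^+ (d * i).
have ginj : injective g.
  move=> i j /eqP; rewrite /g (eq_prim_root_expr Halpha).
  have hi : (d * i < n)%N.
    by rewrite -hdn ltn_pmul2l.
  have hj : (d * j < n)%N.
    by rewrite -hdn ltn_pmul2l.
  rewrite !modn_small // eqn_pmul2l // => /eqP h; exact: val_inj.
have sub : 0 |: [set g i | i in 'I_(q - 1)] \subset F.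
  apply/subsetP => x; rewrite in_setU1 => /orP [/eqP ->|/imsetP [i _ ->]].
    exact: F0.
  rewrite inF /g -exprM.
  have -> : (d * i * q = d * i + d * i * (q - 1))%N.
    by rewrite -{2}(muln1 (d * i)%N) -mulnDr subnKC //; lia.
  by rewrite exprD [(d * i * (q - 1))%N]mulnAC hdn !exprM (prim_expr_order Halpha) expr1n mulr1.
have := subset_leq_card sub; rewrite cardsU1 card_imset // card_ord.
have -> : (0 : L) \notin [set g i | i in 'I_(q - 1)].
  apply/imsetP => -[i _ /esym /eqP]; rewrite /g expf_eq0 (negbTE alpha_neq0).
  by rewrite andbF.
move=> h; apply: leq_trans h; rewrite add1n; lia.
Qed.

Definition Tr (y : L) := \sum_(j < m) y ^+ (q ^ j).

Lemma Tr_F y : Tr y \in F.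
Proof.
have h1 := @big_ord_recl L 0 +%R m (fun j : 'I_m.+1 => y ^+ (q ^ j)).
have h2 := @big_ord_recr L 0 +%R m (fun j : 'I_m.+1 => y ^+ (q ^ j)).
have := etrans (esym h1) h2 => /=.
rewrite frob_card expn0 expr1 [y + _]addrC => /addIr h.
rewrite inF /Tr; apply/eqP.
have -> : forall z : L, z ^+ q = z ^+ (q ^ 1) by move=> z; rewrite expn1.
rewrite frob_sum -[RHS]h.
by apply: eq_bigr => i _; rewrite -exprM -expnSr /bump add1n.
Qed.

Lemma Tr0 : Tr 0 = 0.
Proof. by rewrite /Tr big1 // => j _; rewrite frob0. Qed.

Lemma TrB y z : Tr y - Tr z = Tr (y - z).
Proof. by rewrite /Tr -sumrB; apply: eq_bigr => j _; rewrite frobB. Qed.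

Definition waff (c b : L) : {ffun L -> L} := [ffun x => c + Tr (b * x)].

Lemma waff_in c b : c \in F -> waff c b \in RM_code L q m 1.
Proof.
move=> hc; rewrite inE; apply/andP; split.
  by apply/forallP => x; rewrite ffunE FD ?Tr_F.
apply/forallP => s; apply/implyP => hwt.
under eq_bigr => x _ do rewrite ffunE mulrDl.
rewrite big_split /= -mulr_sumr.
have hs := ltn_ord s.
rewrite power_sum ?mulr0 ?add0r; last first.
  case: (posnP s) => [->//|s0]; apply/orP; right.
  by apply/negP => /(dvdn_leq s0); lia.
rewrite /Tr.
under eq_bigr => x _ do rewrite mulr_suml.
rewrite exchange_big big1 // => j _ /=.
under eq_bigr => x _ do rewrite exprMn -mulrA -exprD.
rewrite -mulr_sumr power_sum ?mulr0 //; apply/orP; right.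
have hj : (q ^ j < q ^ m)%N by rewrite ltn_exp2l ?q2.
have hjn : (q ^ j <= n)%N by have := predNE; lia.
apply/negP => /dvdnP [t ht].
have hqj0 : (0 < q ^ j)%N by rewrite expn_gt0 q0.
case: t ht => [|[|t]] ht.
- by move: ht; rewrite mul0n; lia.
- rewrite mul1n in ht.
  have hsE : (nat_of_ord s = q ^ m - 1 - q ^ j)%N by rewrite subn1; lia.
  have := wt_compl q2 hj; rewrite wt_exp ?q2 //.
  move: hwt; rewrite hsE; move: (wt_q q _) => A; lia.
- have : (t.+2 * n >= 2 * n)%N by rewrite leq_mul2r; lia.
  lia.
Qed.

Lemma waff_inj c b c' b' : waff c b = waff c' b' -> c = c' /\ b = b'.
Proof.
move=> H.
have h0 := congr1 (fun f : {ffun L -> L} => f 0) H.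
rewrite /= !ffunE !mulr0 !Tr0 !addr0 in h0.
split => //; subst c'.
have hx : forall x, Tr (b * x) = Tr (b' * x).
  by move=> x; have := congr1 (fun f : {ffun L -> L} => f x) H; rewrite /= !ffunE => /addrI.
set d := b - b'.
have hd : forall x, Tr (d * x) = 0 by move=> x; rewrite /d mulrBl -TrB hx subrr.
apply/eqP; rewrite -subr_eq0 -/d; apply/negPn/negP => hd0.
pose P : {poly L} := \sum_(j < m) (d ^+ (q ^ j)) *: 'X^(q ^ j).
have hev : forall x, P.[x] = 0.
  move=> x; rewrite /P horner_sum -[RHS](hd x) /Tr; apply: eq_bigr => j _.
  by rewrite hornerZ hornerXn exprMn.
have hc1 : P`_1 = d.
  rewrite /P coef_sum (bigD1 (Ordinal m0)) //= big1 ?addr0.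
    by rewrite coefZ coefXn expn0 eqxx mulr1 expr1.
  move=> j hj; rewrite coefZ coefXn.
  have : (1 < q ^ j)%N.
    have hj0 : (0 < j)%N by case: j hj => -[|j] //= hj; rewrite eqE /= in hj.
    by rewrite -{1}(expn0 q) ltn_exp2l ?q2.
  by case: eqVneq => [<-|] //; rewrite mulr0.
have hP : P != 0 by apply/negP => /eqP hP0; move: hc1; rewrite hP0 coef0 => /esym/eqP; rewrite (negbTE hd0).
have hsz : (size P <= q ^ m)%N.
  rewrite /P; elim/big_ind: _.
  - by rewrite size_poly0.
  - by move=> u v hu hv; apply: leq_trans (size_polyD _ _) _; rewrite geq_max hu hv.
  - move=> j _; apply: leq_trans (size_scale_leq _ _) _; rewrite size_polyXn.
    by rewrite ltn_exp2l ?q2.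
have hr : all (root P) (enum L) by apply/allP => x _; rewrite /root hev.
have := max_poly_roots hP hr (enum_uniq _).
rewrite -cardE HL => h; have := leq_trans h hsz. by rewrite ltnn.
Qed.

Lemma card_C1 : (q ^ m.+1 <= #|RM_code L q m 1|)%N.
Proof.
pose A := [set waff u.1 u.2 | u in setX F [set: L]].
have sub : A \subset RM_code L q m 1.
  apply/subsetP => w /imsetP [u]; rewrite inE => /andP [hu _] ->.
  exact: waff_in.
apply: leq_trans (subset_leq_card sub).
rewrite card_in_imset ?cardsX ?cardsT ?card_F ?HL ?expnS //.
move=> [c b] [c' b'] _ _ /= /waff_inj [-> ->] //.
Qed.

Lemma indep_poly (z : L) (e d : nat) (mu : 'I_d -> L) :
  (forall s t : 'I_d, z ^+ (q ^ (e * s)) = z ^+ (q ^ (e * t)) -> s = t) ->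
  (forall t, mu t ^+ (q ^ e) = mu t) ->
  \sum_(t < d) mu t * z ^+ t = 0 -> forall t, mu t = 0.
Proof.
move=> hinj hmu hsum.
have hmu' : forall t u, mu t ^+ (q ^ (e * u)) = mu t.
  move=> t; elim=> [|u IH]; first by rewrite muln0 expn0 expr1.
  by rewrite mulnS expnD exprM hmu IH.
pose nu := fun t : nat => oapp mu 0 (insub t).
have hnu : forall u : 'I_d, nu u = mu u by move=> u; rewrite /nu valK.
pose P : {poly L} := \poly_(t < d) nu t.
pose rs := [seq z ^+ (q ^ (e * u)) | u : 'I_d <- enum 'I_d].
have hr : all (root P) rs.
  apply/allP => x /mapP [u _ ->]; rewrite /root /P horner_poly; apply/eqP.
  transitivity ((\sum_(t < d) mu t * z ^+ t) ^+ (q ^ (e * u))); last first.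
    by rewrite hsum frob0.
  rewrite frob_sum; apply: eq_bigr => t _.
  by rewrite hnu exprMn hmu' -!exprM mulnC.
have hu : uniq rs.
  rewrite map_inj_uniq ?enum_uniq // => s t; exact: hinj.
have hP : P = 0.
  apply/eqP/negPn/negP => hP.
  have := max_poly_roots hP hr hu.
  rewrite size_map -cardE card_ord => h.
  by have := leq_trans h (size_poly _ _); rewrite ltnn.
move=> t; have := congr1 (fun P : {poly L} => P`_t) hP.
by rewrite /= coef_poly ltn_ord coef0 hnu.
Qed.

Lemma sum_delta_gen (I : finType) (f : I -> L) i :
  \sum_j (j == i)%:R * f j = f i.
Proof.
rewrite (bigD1 i) //= eqxx mul1r big1 ?addr0 // => j /negbTE ->; by rewrite mul0r.
Qed.

Lemma pffunP (f : {ffun L -> L}) (I : {set L}) :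
  (f \in pffun_on 0 I F) <-> ((forall x, x \notin I -> f x = 0) /\ (forall x, x \in I -> f x \in F)).
Proof.
split.
  move/pffun_onP => [hs him]; split.
    move=> x hx; apply/eqP/negPn/negP => hfx.
    by move/subsetP: hs => /(_ x); rewrite inE hfx => /(_ isT); rewrite (negbTE hx).
  by move=> x hx; apply: him; apply/imageP; exists x.
move=> [h1 h2]; apply/pffun_onP; split.
  by apply/subsetP => x; rewrite inE; apply: contraR => hx; rewrite h1.
by move=> y /imageP [x hx ->]; apply: h2.
Qed.

Lemma info_gen (C : {set {ffun L -> L}}) (I : {set L}) :
  (forall w, w \in C -> forall x, w x \in F) ->
  (forall w1 w2, w1 \in C -> w2 \in C -> [ffun x => w1 x - w2 x] \in C) ->
  (forall w, w \in C -> (forall x, x \in I -> w x = 0) -> forall x, w x = 0) ->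
  (q ^ #|I| <= #|C|)%N ->
  info_set q C I.
Proof.
move=> hF hsub hinj hcard.
pose rho (w : {ffun L -> L}) := [ffun x => if x \in I then w x else 0].
have rinj : {in C &, injective rho}.
  move=> w1 w2 h1 h2 he; apply/ffunP => x.
  have := hinj _ (hsub _ _ h1 h2) => /(_ _) h.
  suff : [ffun x => w1 x - w2 x] x = 0 by rewrite ffunE => /eqP; rewrite subr_eq0 => /eqP.
  apply: h => y hy; rewrite ffunE.
  have := congr1 (fun f : {ffun L -> L} => f y) he; rewrite /rho /= !ffunE hy => ->.
  by rewrite subrr.
have hsubset : rho @: C \subset pffun_on 0 I F.
  apply/subsetP => f /imsetP [w hw ->]; apply/pffunP; split => x hx; rewrite ffunE.
    by rewrite (negbTE hx).
  by rewrite hx hF.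
have hcardp : #|[set f | f \in pffun_on 0 I F]| = (q ^ #|I|)%N.
  by rewrite cardsE card_pffun_on card_F.
have heq : rho @: C = [set f | f \in pffun_on 0 I F].
  apply/eqP; rewrite eqEcard card_in_imset // hcardp hcard andbT.
  by apply/subsetP => f hf; rewrite inE; apply: (subsetP hsubset).
have hC : #|C| = (q ^ #|I|)%N by rewrite -hcardp -heq card_in_imset.
split; first by rewrite /code_dim hC trunc_expnK ?q2.
move=> f hf.
have : [ffun x => if x \in I then f x else 0] \in rho @: C.
  rewrite heq inE; apply/pffunP; split => x hx; rewrite ffunE.
    by rewrite (negbTE hx).
  by rewrite hx hf.
move/imsetP => [w hw he]; exists w => // x hx.
have := congr1 (fun f : {ffun L -> L} => f x) he; rewrite /rho /= !ffunE hx => ->.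
by [].
Qed.

Lemma info_gen2 (C : {set {ffun L -> L}}) (I : {set L}) :
  (forall w, w \in C -> forall x, w x \in F) ->
  (forall w1 w2, w1 \in C -> w2 \in C -> [ffun x => w1 x - w2 x] \in C) ->
  (forall w, w \in C -> (forall x, x \in I -> w x = 0) -> forall x, w x = 0) ->
  (forall f : L -> L, (forall x, x \in I -> f x \in F) ->
    exists2 c, c \in C & forall x, x \in I -> c x = f x) ->
  info_set q C I.
Proof.
move=> hF hsub hinj hsurj; apply: info_gen => //.
pose rho (w : {ffun L -> L}) := [ffun x => if x \in I then w x else 0].
have hsubset : pffun_on 0 I F \subset rho @: C.
  apply/subsetP => f /pffunP [h1 h2].
  have [w hw hwf] := hsurj f h2.
  apply/imsetP; exists w => //; apply/ffunP => x; rewrite ffunE.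
  by case: ifP => hx; [rewrite hwf | rewrite h1 // hx].
have := subset_leq_card hsubset; rewrite card_pffun_on card_F => h.
apply: leq_trans h _; exact: leq_imset_card.
Qed.

Lemma RM_F rho w : w \in RM_code L q m rho -> forall x, w x \in F.
Proof. by rewrite inE => /andP [/forallP h _]. Qed.

Lemma RM_sub rho w1 w2 : w1 \in RM_code L q m rho -> w2 \in RM_code L q m rho ->
  [ffun x => w1 x - w2 x] \in RM_code L q m rho.
Proof.
rewrite !inE => /andP [/forallP f1 /forallP c1] /andP [/forallP f2 /forallP c2].
apply/andP; split; apply/forallP => x.
  by rewrite ffunE FB.
apply/implyP => hx.
move: (implyP (c1 x) hx) (implyP (c2 x) hx) => /eqP h1 /eqP h2; apply/eqP.
under eq_bigr => y _ do rewrite ffunE mulrBl.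
by rewrite sumrB h1 h2 subrr.
Qed.

Variables (r1 r2 a : nat) (T : 'Z_n -> 'Z_r1 * 'Z_r2).
Hypotheses (Hn : n = (r1 * r2)%N) (Hr1 : (1 < r1)%N) (Hr2 : (1 < r2)%N)
  (Hcop : coprime r1 r2) (Ha0 : (0 < a)%N) (Ha1 : (q ^ a = 1 %[mod r1])%N)
  (Hamin : forall k : nat, (0 < k)%N -> (q ^ k = 1 %[mod r1])%N -> (a <= k)%N)
  (HTadd : forall x y, T (x + y) = T x + T y)
  (Tinj : injective T) (Tsurj : forall y, exists x, T x = y).
Variables (e1 e2 : 'Z_n).
Hypotheses (He1 : T e1 = (1, 0)) (He2 : T e2 = (0, 1)).

Lemma n_gt1 : (1 < n)%N.
Proof. rewrite Hn; have := leq_mul Hr1 Hr2; lia. Qed.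

Lemma ZnE : (Zp_trunc n).+2 = n. Proof. exact: Zp_cast n_gt1. Qed.

Lemma valZ (i : 'Z_n) : (i < n)%N.
Proof. by have := ltn_ord i; move: (nat_of_ord i) => j; rewrite ZnE. Qed.

Lemma alpha_add (x y : 'Z_n) : alpha ^+ ((x + y)%R : 'Z_n) = alpha ^+ x * alpha ^+ y.
Proof.
have -> : nat_of_ord ((x + y)%R : 'Z_n) = ((x + y) %% n)%N.
  rewrite [LHS]/=; move: (nat_of_ord x) (nat_of_ord y) => u v; by rewrite ZnE.
by rewrite (prim_expr_mod Halpha) exprD.
Qed.

Lemma alpha_muln (x : 'Z_n) j : alpha ^+ (x *+ j : 'Z_n) = (alpha ^+ x) ^+ j.
Proof.
elim: j => [|j IH]; first by rewrite mulr0n expr0.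
by rewrite mulrS alpha_add IH exprS.
Qed.

Lemma T0 : T 0 = 0.
Proof.
have h := HTadd 0 0; rewrite addr0 in h.
by apply: (addrI (T 0)); rewrite addr0 -h.
Qed.

Lemma TmulN x j : T (x *+ j) = T x *+ j.
Proof.
elim: j => [|j IH]; first by rewrite !mulr0n T0.
by rewrite !mulrS HTadd IH.
Qed.

Lemma pair_mulrn (A B : zmodType) (x : A) (y : B) j : (x, y) *+ j = (x *+ j, y *+ j).
Proof. by elim: j => [|j IH] //; rewrite !mulrS IH. Qed.

Lemma Zr_nat0 (r : nat) (hr : (1 < r)%N) j : ((j%:R : 'Z_r) == 0) = (r %| j)%N.
Proof. by rewrite Zp_nat -val_eqE /= Zp_cast. Qed.

Definition beta := alpha ^+ e1.
Definition gamma := alpha ^+ e2.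

Lemma decomp (i : 'Z_n) : alpha ^+ i = beta ^+ (T i).1 * gamma ^+ (T i).2.
Proof.
have hi : i = e1 *+ (T i).1 + e2 *+ (T i).2.
  apply: Tinj; rewrite HTadd !TmulN He1 He2 !pair_mulrn.
  case: (T i) => u v /=; rewrite !mul0rn.
  have -> : forall (A B : zmodType) (a c : A) (b d : B), (a, b) + (c, d) = (a + c, b + d) by [].
  by rewrite addr0 add0r !natr_Zp.
by rewrite {1}hi alpha_add !alpha_muln.
Qed.

Lemma alphaZ_eq1 (x : 'Z_n) : (alpha ^+ x == 1) = (x == 0).
Proof.
rewrite -(prim_order_dvd Halpha).
case: (posnP x) => [hx|hx].
  by rewrite hx dvdn0; apply/esym/eqP/val_inj.
have hxn := valZ x.
rewrite (negbTE (_ : ~~ (n %| x)%N)); last by apply/negP => /(dvdn_leq hx); lia.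
by apply/esym/negP => /eqP hx0; move: hx; rewrite hx0.
Qed.

Lemma T_eq0 x : (x == 0) = (T x == 0).
Proof. by rewrite -T0 (inj_eq Tinj). Qed.

Lemma beta_eq1 j : (beta ^+ j == 1) = (r1 %| j)%N.
Proof.
rewrite /beta -alpha_muln alphaZ_eq1 T_eq0 TmulN He1 pair_mulrn mul0rn.
have -> : (0 : 'Z_r1 * 'Z_r2) = (0, 0) by [].
by rewrite xpair_eqE eqxx andbT Zr_nat0.
Qed.

Lemma gamma_eq1 j : (gamma ^+ j == 1) = (r2 %| j)%N.
Proof.
rewrite /gamma -alpha_muln alphaZ_eq1 T_eq0 TmulN He2 pair_mulrn mul0rn.
have -> : (0 : 'Z_r1 * 'Z_r2) = (0, 0) by [].
by rewrite xpair_eqE eqxx Zr_nat0.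
Qed.

Lemma alpha_pow_neq0 j : alpha ^+ j != 0.
Proof. by rewrite expf_neq0 // alpha_neq0. Qed.

Lemma r1_dvd_n : (r1 %| n)%N. Proof. by rewrite Hn dvdn_mulr. Qed.
Lemma r2_dvd_n : (r2 %| n)%N. Proof. by rewrite Hn dvdn_mull. Qed.

Lemma cop_q r : (r %| n)%N -> coprime q r.
Proof.
move=> hr; apply: (coprime_dvdr hr).
apply: (@coprime_dvdl _ (q ^ m)%N); first by rewrite dvdn_exp.
by rewrite -predNE coprimeSn.
Qed.

Lemma pow_q_eq (z : L) r (hr : (0 < r)%N) (hz : forall j, (z ^+ j == 1) = (r %| j)%N)
  (hc : coprime q r) u v : (u <= v)%N -> z ^+ (q ^ u) = z ^+ (q ^ v) ->
  (r %| q ^ (v - u) - 1)%N.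
Proof.
move=> huv he.
have hz0 : z != 0.
  apply/negP => /eqP z0; have := hz r; rewrite dvdnn z0 expr0n.
  by case: (r) hr => [|r'] //= _; rewrite eq_sym oner_eq0.
have hle : (q ^ u <= q ^ v)%N by rewrite leq_exp2l ?q2.
have : z ^+ (q ^ v - q ^ u) == 1.
  have h : z ^+ (q ^ u) = z ^+ (q ^ v - q ^ u) * z ^+ (q ^ u) by rewrite -exprD subnK.
  apply/eqP; apply: (mulIf (expf_neq0 (q ^ u) hz0)); by rewrite mul1r -h.
have hv : (q ^ v = q ^ (v - u) * q ^ u)%N by rewrite -expnD subnK.
rewrite hz hv -{2}(mul1n (q ^ u)%N) -mulnBl Gauss_dvdl //.
by rewrite coprime_sym coprimeXl.
Qed.

Lemma mod1_dvd r x : (0 < x)%N -> (x = 1 %[mod r])%N <-> (r %| x - 1)%N.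
Proof. by move=> hx; rewrite -eqn_mod_dvd //; split => [->|/eqP]. Qed.

Lemma qpos j : (0 < q ^ j)%N. Proof. by rewrite expn_gt0 q0. Qed.

Lemma beta_inj (s t : 'I_a) : beta ^+ (q ^ (1 * s)) = beta ^+ (q ^ (1 * t)) -> s = t.
Proof.
rewrite !mul1n => h; apply: val_inj => /=.
have key : forall u v : 'I_a, (u < v)%N -> beta ^+ (q ^ u) = beta ^+ (q ^ v) -> False.
  move=> u v huv he.
  have := pow_q_eq (ltnW Hr1) beta_eq1 (cop_q r1_dvd_n) (ltnW huv) he.
  have hpos : (0 < v - u)%N by rewrite subn_gt0.
  rewrite -mod1_dvd ?qpos // => /(Hamin hpos) h2.
  have := ltn_ord v; lia.
case: (ltngtP s t) => // hst.
  by case: (key _ _ hst h).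
by case: (key _ _ hst (esym h)).
Qed.

Lemma dvd_m : (q ^ m = 1 %[mod r1])%N.
Proof. by apply/mod1_dvd; [exact: qpos | rewrite subn1 r1_dvd_n]. Qed.

Lemma qa_pow j : (q ^ (a * j) = 1 %[mod r1])%N.
Proof. by rewrite expnM -modnXm Ha1 modnXm exp1n. Qed.

Lemma a_dvd_m : (a %| m)%N.
Proof.
rewrite /dvdn; apply/eqP; have hd := divn_eq m a.
case: (posnP (m %% a)) => [//|hpos].
have : (q ^ (m %% a) = 1 %[mod r1])%N.
  have e : (q ^ m = q ^ (a * (m %/ a)) * q ^ (m %% a))%N.
    by rewrite -expnD (mulnC a) -divn_eq.
  have := dvd_m; rewrite e -modnMml qa_pow modnMml mul1n.
  by move=> ->.
move/(Hamin hpos); have := ltn_pmod m Ha0; lia.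
Qed.

Local Notation b := (m %/ a)%N.

Lemma hab : (a * b)%N = m. Proof. by rewrite mulnC divnK // a_dvd_m. Qed.

Lemma bern x c : (0 < x)%N -> (c * (x - 1) + 1 <= x ^ c)%N.
Proof.
move=> hx; elim: c => [|c IH]; first by rewrite mul0n expn0.
rewrite expnS.
have h1 : (x * (c * (x - 1) + 1) <= x * x ^ c)%N by rewrite leq_mul2l IH orbT.
apply: leq_trans h1.
have -> : (c.+1 * (x - 1) = c * (x - 1) + (x - 1))%N by rewrite mulSn addnC.
move: (c * (x - 1))%N => y.
have := leq_pmull y hx; rewrite mulnDr muln1; lia.
Qed.

Lemma b_le_r2 : (b <= r2)%N.
Proof.
have hqa : (r1 <= q ^ a - 1)%N.
  apply: dvdn_leq; last by rewrite -mod1_dvd ?qpos.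
  have : (1 < q ^ a)%N by rewrite -{1}(expn0 q) ltn_exp2l ?q2.
  lia.
have hb := bern b (qpos a).
rewrite -expnM hab in hb.
have hn' : (r1 * r2 + 1 = q ^ m)%N by rewrite -Hn -predNE addn1.
have : (b * r1 <= r1 * r2)%N.
  apply: (@leq_trans (b * (q ^ a - 1))%N); first by rewrite leq_mul2l hqa orbT.
  lia.
rewrite mulnC leq_mul2l; have := Hr1; case: (r1) => //.
Qed.

Lemma a_le_r1 : (a <= r1)%N.
Proof.
have hc : coprime q r1 := cop_q r1_dvd_n.
have := Euler_exp_totient hc.
have htp : (0 < totient r1)%N by rewrite totient_gt0; have := Hr1; lia.
move/(Hamin htp) => h; apply: leq_trans h _.
rewrite totient_count_coprime.
apply: (@leq_trans (\sum_(0 <= d < r1) 1)%N).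
  by apply: leq_sum => d _; case: coprime.
by rewrite sum_nat_const_nat subn0 muln1.
Qed.

Lemma gamma_inj (s t : 'I_b) : gamma ^+ (q ^ (a * s)) = gamma ^+ (q ^ (a * t)) -> s = t.
Proof.
move=> h; apply: val_inj => /=.
have key : forall u v : 'I_b, (u < v)%N -> gamma ^+ (q ^ (a * u)) = gamma ^+ (q ^ (a * v)) -> False.
  move=> u v huv he.
  have hle : (a * u <= a * v)%N by rewrite leq_mul2l ltnW ?orbT.
  have := pow_q_eq (ltnW Hr2) gamma_eq1 (cop_q r2_dvd_n) hle he.
  rewrite -mulnBr => h2.
  have hv := ltn_ord v.
  move: (nat_of_ord u) (nat_of_ord v) huv hv h2 => {he hle} u' v' huv hv h2.
  clear u v; rename u' into u; rename v' into v.
  have h1 : (r1 %| q ^ (a * (v - u)) - 1)%N by rewrite -mod1_dvd ?qpos ?qa_pow.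
  have : (n %| q ^ (a * (v - u)) - 1)%N by rewrite Hn Gauss_dvd // h1 h2.
  have hd : (0 < v - u)%N by rewrite subn_gt0.
  have hlt : (a * (v - u) < m)%N.
    by rewrite -hab ltn_mul2l Ha0 /=; exact: leq_ltn_trans (leq_subr u v) hv.
  have hq1 : (1 < q ^ (a * (v - u)))%N.
    by rewrite -{1}(expn0 q) ltn_exp2l ?q2 // muln_gt0 Ha0.
  have hq2 : (q ^ (a * (v - u)) < q ^ m)%N by rewrite ltn_exp2l ?q2.
  have hX : (0 < q ^ (a * (v - u)) - 1)%N by rewrite subn_gt0.
  move/(dvdn_leq hX); have := predNE.
  move: (q ^ (a * (v - u)))%N (q ^ m)%N hq1 hq2 => X Y hq1 hq2. lia.
case: (ltngtP s t) => // hst.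
  by case: (key _ _ hst h).
by case: (key _ _ hst (esym h)).
Qed.

Lemma beta_qa : beta ^+ (q ^ a) = beta.
Proof.
have h : (r1 %| q ^ a - 1)%N by rewrite -mod1_dvd ?qpos.
rewrite -beta_eq1 in h.
have hq : (0 < q ^ a)%N := qpos a.
by rewrite -(subnK hq) exprD (eqP h) mul1r expr1.
Qed.

Lemma indep2 (lam : 'I_a -> 'I_b -> L) : (forall i j, lam i j \in F) ->
  \sum_(i < a) \sum_(j < b) lam i j * (beta ^+ i * gamma ^+ j) = 0 ->
  forall i j, lam i j = 0.
Proof.
move=> hF hs.
pose mu := fun j : 'I_b => \sum_(i < a) lam i j * beta ^+ i.
have hmu : forall j, mu j = 0.
  apply: (@indep_poly gamma a b mu gamma_inj).
    move=> j; rewrite /mu frob_sum; apply: eq_bigr => i _.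
    by rewrite exprMn inF_pow // -exprM mulnC exprM beta_qa.
  rewrite -[RHS]hs exchange_big /=; apply: eq_bigr => j _.
  by rewrite /mu mulr_suml; apply: eq_bigr => i _; rewrite mulrA.
move=> i j.
apply: (@indep_poly beta 1 a (fun i => lam i j) beta_inj).
  by move=> t; apply: inF_pow.
exact: hmu.
Qed.

Definition g (u : 'I_a * 'I_b) := beta ^+ u.1 * gamma ^+ u.2.

Lemma indep (mu : 'I_a * 'I_b -> L) : (forall u, mu u \in F) ->
  \sum_u mu u * g u = 0 -> forall u, mu u = 0.
Proof.
move=> hF hs [i j].
apply: (@indep2 (fun i j => mu (i, j))) => //.
by rewrite pair_big /= -[RHS]hs; apply: eq_bigr => -[i1 j1] _.
Qed.

Lemma g_neq0 u : g u != 0.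
Proof. by rewrite /g mulf_neq0 // expf_neq0 // alpha_pow_neq0. Qed.

Lemma g_inj : injective g.
Proof.
move=> u v he; apply/eqP/negPn/negP => huv.
pose mu := fun w => (w == u)%:R - (w == v)%:R : L.
have hF : forall w, mu w \in F.
  by move=> w; rewrite /mu FB //; case: (_ == _); rewrite ?F0 ?F1.
have := @indep mu hF.
have hs : \sum_w mu w * g w = 0.
  under eq_bigr => w _ do rewrite /mu mulrBl.
  by rewrite sumrB !sum_delta_gen he subrr.
move/(_ hs u); rewrite /mu eqxx (negbTE huv) subr0 => /eqP; by rewrite oner_eq0.
Qed.

Lemma span y : exists mu : {ffun 'I_a * 'I_b -> L},
  (forall u, mu u \in F) /\ \sum_u mu u * g u = y.
Proof.
pose Phi := fun mu : {ffun 'I_a * 'I_b -> L} => \sum_u mu u * g u.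
pose D := [set mu : {ffun 'I_a * 'I_b -> L} | mu \in ffun_on F].
have hinj : {in D &, injective Phi}.
  move=> mu nu; rewrite !inE => /ffun_onP hm /ffun_onP hn he.
  apply/ffunP => u; apply/eqP; rewrite -subr_eq0; apply/eqP.
  apply: (@indep (fun u => mu u - nu u)) => [w|]; first by rewrite FB.
  under eq_bigr => w _ do rewrite mulrBl.
  by rewrite sumrB; apply/eqP; rewrite subr_eq0; apply/eqP.
have hcard : #|Phi @: D| = #|L|.
  rewrite card_in_imset // cardsE card_ffun_on card_F card_prod !card_ord hab.
  by rewrite HL.
have : y \in Phi @: D.
  have -> : Phi @: D = [set: L].
    apply/eqP; rewrite eqEcard; apply/andP; split; first exact: subsetT.
    by rewrite cardsT hcard.
  by rewrite inE.
move/imsetP => [mu]; rewrite inE => /ffun_onP hm ->.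
by exists mu.
Qed.

Definition TinvG := [set i : 'Z_n | ((T i).1 < a)%N && ((T i).2 < m %/ a)%N].
Definition P0 := [set alpha ^+ (nat_of_ord i) | i in TinvG].
Definition I2 := [set alpha ^+ (nat_of_ord i) | i in ~: TinvG].

Lemma valZr (r : nat) (hr : (1 < r)%N) j : (j < r)%N -> nat_of_ord (inZp j : 'Z_r) = j.
Proof. by move=> hj; rewrite /= Zp_cast // modn_small. Qed.

Lemma P0E : P0 = [set g u | u in [set: 'I_a * 'I_b]].
Proof.
apply/setP => y; apply/imsetP/imsetP.
  move=> [i]; rewrite inE => /andP [h1 h2] ->.
  exists (Ordinal h1, Ordinal h2); first by rewrite inE.
  by rewrite decomp.
move=> [u _ ->].
have hu1 : (u.1 < r1)%N by apply: leq_trans (ltn_ord u.1) a_le_r1.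
have hu2 : (u.2 < r2)%N by apply: leq_trans (ltn_ord u.2) b_le_r2.
have hv1 := valZr Hr1 hu1; have hv2 := valZr Hr2 hu2.
move: (inZp u.1 : 'Z_r1) (inZp u.2 : 'Z_r2) hv1 hv2 => y1 y2 hv1 hv2.
have [i hi] := Tsurj (y1, y2).
exists i.
  by rewrite inE hi /= hv1 hv2 !ltn_ord.
by rewrite decomp hi /g /= hv1 hv2.
Qed.

Lemma zero_notin : (0 : L) \notin P0.
Proof.
rewrite P0E; apply/imsetP => -[u _ h].
by move: (g_neq0 u); rewrite -h eqxx.
Qed.

Lemma alpha_injZ (i j : 'Z_n) : alpha ^+ i = alpha ^+ j -> i = j.
Proof.
move/eqP; rewrite (eq_prim_root_expr Halpha) !modn_small ?valZ // => /eqP h.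
exact: val_inj.
Qed.

Lemma I2E : I2 = ~: (0 |: P0).
Proof.
apply/setP => y; rewrite !inE negb_or; apply/idP/idP.
  move/imsetP => [i hi ->]; rewrite alpha_pow_neq0 /=.
  apply/imsetP => -[j hj /alpha_injZ hij].
  by move: hi; rewrite inE hij hj.
move=> /andP [hy0 hyP].
have hyn : y ^+ n = 1.
  have := frob_card y; rewrite -predNE exprS => h.
  by apply: (mulfI hy0); rewrite mulr1.
have [i hi] := prim_rootP Halpha hyn.
apply/imsetP; exists (inZp i : 'Z_n).
  rewrite inE; apply/negP => hin; move/negP: hyP; apply.
  apply/imsetP; exists (inZp i : 'Z_n) => //.
  by rewrite valZr ?n_gt1.
by rewrite valZr ?n_gt1.
Qed.

Lemma card_P0 : #|P0| = m.
Proof. by rewrite P0E card_imset ?cardsT ?card_prod ?card_ord ?hab //; exact: g_inj. Qed.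

Lemma card_I1 : #|0 |: P0| = m.+1.
Proof. by rewrite cardsU1 zero_notin card_P0. Qed.

Lemma partition (h : L -> L) :
  \sum_(x : L) h x = \sum_(x in I2) h x + h 0 + \sum_u h (g u).
Proof.
rewrite (bigID (fun x => x \in I2)) /= -addrA; congr (_ + _).
rewrite (eq_bigl (fun x => x \in 0 |: P0)); last first.
  by move=> x; rewrite I2E inE negbK.
rewrite big_setU1 ?zero_notin //=; congr (_ + _).
rewrite P0E big_imset /=; last by move=> u v _ _; exact: g_inj.
by apply: eq_bigl => u; rewrite inE.
Qed.

Lemma I1_inj (w : {ffun L -> L}) : w \in RM_code L q m 1 ->
  (forall x, x \in 0 |: P0 -> w x = 0) -> forall x, w x = 0.
Proof.
move=> hw h0 x.
have hw0 : w 0 = 0 by apply: h0; rewrite setU11.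
have hg : forall u, w (g u) = 0.
  by move=> u; apply: h0; rewrite in_setU1 P0E; apply/orP; right; apply/imsetP; exists u.
have [hadd hhom] := C1_affine hw.
have [mu [hmu <-]] := span x.
pose D := fun y => w 0 - w y.
have hD : D (\sum_u mu u * g u) = \sum_u D (mu u * g u).
  apply: (big_morph D hadd); by rewrite /D subrr.
have : D (\sum_u mu u * g u) = 0.
  rewrite hD big1 // => u _; rewrite /D hhom // hg hw0 subrr mulr0 //.
by rewrite /D hw0 sub0r => /eqP; rewrite oppr_eq0 => /eqP.
Qed.

Lemma part1 : info_set q (RM_code L q m 1) (0 |: P0).
Proof.
apply: info_gen.
- exact: RM_F.
- exact: RM_sub.
- exact: I1_inj.
- by rewrite card_I1 card_C1.
Qed.

Lemma mq2 : (2 <= m * (q - 1))%N.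
Proof.
have hq := q2; have hn := n_gt1.
case: (ltngtP m 1) => hm.
- by move: m0; rewrite leqNgt hm.
- have : (2 * 1 <= m * (q - 1))%N by apply: leq_mul => //; lia.
  by rewrite muln1.
- by rewrite hm mul1n; move: hn; rewrite hm expn1; lia.
Qed.

Local Notation C2 := (RM_code L q m (m * (q - 1) - 2)).

Lemma thr2 : (m * (q - 1) - (m * (q - 1) - 2) = 2)%N.
Proof. have := mq2; lia. Qed.

Lemma C2_mem (w : {ffun L -> L}) : (forall x, w x \in F) ->
  \sum_(x : L) w x = 0 -> \sum_(x : L) w x * x = 0 -> w \in C2.
Proof.
move=> hF hs0 hs1; rewrite inE; apply/andP; split; first by apply/forallP.
apply/forallP => s; apply/implyP; rewrite thr2 => hs.
have [h0|h1] : wt_q q s = 0%N \/ wt_q q s = 1%N by move: (wt_q q s) hs => t; lia.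
  rewrite (wt0 q2 h0); under eq_bigr => x _ do rewrite expr0 mulr1.
  by rewrite hs0.
have [j ->] := wt1 q2 h1.
apply/eqP; transitivity ((\sum_(x : L) w x * x) ^+ (q ^ j)); last by rewrite hs1 frob0.
rewrite frob_sum; apply: eq_bigr => x _.
by rewrite exprMn (inF_pow _ (hF x)).
Qed.

Lemma C2_sums (w : {ffun L -> L}) : w \in C2 ->
  \sum_(x : L) w x = 0 /\ \sum_(x : L) w x * x = 0.
Proof.
rewrite inE => /andP [_ /forallP h]; split.
  have := h (Ordinal n_gt0); rewrite thr2 /= /wt_q /=.
  by under eq_bigr => x _ do rewrite expr0 mulr1; move=> /eqP.
have := h (Ordinal n_gt1); rewrite thr2 /=.
have -> : wt_q q 1 = 1%N by have := wt_exp q2 0; rewrite expn0.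
by under eq_bigr => x _ do rewrite expr1; move=> /eqP.
Qed.

Lemma part2 : info_set q C2 I2.
Proof.
apply: info_gen2.
- exact: RM_F.
- exact: RM_sub.
- move=> w hw h0.
  have [hs0 hs1] := C2_sums hw.
  have hg : forall u, w (g u) = 0.
    apply: (@indep (fun u => w (g u))); first by move=> u; exact: RM_F hw _.
    move: hs1; rewrite partition big1 ?mulr0 ?add0r ?addr0 //.
    by move=> x hx; rewrite h0 // mul0r.
  have hw0 : w 0 = 0.
    move: hs0; rewrite partition big1 ?add0r; last by move=> x hx; rewrite h0.
    by rewrite big1 ?addr0 // => u _; rewrite hg.
  move=> x; case: (boolP (x \in I2)) => hx; first by rewrite h0.
  move: hx; rewrite I2E inE negbK in_setU1 => /orP [/eqP ->//|].
  by rewrite P0E => /imsetP [u _ ->]; rewrite hg.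
- move=> f hf.
  pose S0 := \sum_(x in I2) f x.
  pose S1 := \sum_(x in I2) f x * x.
  have [mu [hmu hmuS]] := span (- S1).
  pose c0 := - S0 - \sum_u mu u.
  pose w := [ffun x => if x \in I2 then f x else if x == 0 then c0
                       else \sum_(u | g u == x) mu u].
  have wg : forall u, w (g u) = mu u.
    move=> u; rewrite /w ffunE.
    have -> : (g u \in I2) = false.
      apply/negbTE; rewrite I2E in_setC negbK in_setU1 P0E.
      by apply/orP; right; apply/imsetP; exists u.
    rewrite (negbTE (g_neq0 u)).
    rewrite (eq_bigl (fun v => v == u)); first by rewrite big_pred1_eq.
    by move=> v; apply/eqP/eqP => [/g_inj|->].
  have w0 : w 0 = c0.
    rewrite /w ffunE eqxx.
    have -> : ((0 : L) \in I2) = false by apply/negbTE; rewrite I2E in_setC negbK setU11.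
    by [].
  have wI : forall x, x \in I2 -> w x = f x by move=> x hx; rewrite /w ffunE hx.
  exists w => //.
  apply: C2_mem.
  + move=> x; rewrite /w ffunE; case: ifP => hx; first exact: hf.
    case: ifP => _.
      apply: FB; first (apply: FN; apply: Fsum => y hy; exact: hf).
      by apply: Fsum => u _; exact: hmu.
    by apply: Fsum => u _; exact: hmu.
  + rewrite partition w0.
    have f1 : \sum_(x in I2) w x = S0 by apply: eq_bigr => x hx; rewrite wI.
    have f2 : \sum_u w (g u) = \sum_u mu u by apply: eq_bigr => u _; rewrite wg.
    rewrite f1 f2 /c0.
    have hr : forall A B' : L, A + (- A - B') + B' = 0 by move=> A B'; ring.
    exact: hr.
  + rewrite partition w0 mulr0 addr0.
    have f3 : \sum_(x in I2) w x * x = S1 by apply: eq_bigr => x hx; rewrite wI.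
    have f4 : \sum_u w (g u) * g u = \sum_u mu u * g u by apply: eq_bigr => u _; rewrite wg.
    by rewrite f3 f4 hmuS subrr.
Qed.

End Fld.

Unset Implicit Arguments.

Theorem mainTheorem2
  (q m r1 r2 a : nat) (L : finFieldType)
  (Hq : exists p k : nat, [/\ prime p, (0 < k)%N & q = (p ^ k)%N])
  (Hm : (0 < m)%N)
  (HL : #|L| = (q ^ m)%N)
  (Hn : (q ^ m).-1 = (r1 * r2)%N)
  (Hr1 : (1 < r1)%N) (Hr2 : (1 < r2)%N) (Hcop : coprime r1 r2)
  (* a is the multiplicative order of q modulo r1 *)
  (Ha0 : (0 < a)%N) (Ha1 : (q ^ a = 1 %[mod r1])%N)
  (Hamin : forall k : nat, (0 < k)%N -> (q ^ k = 1 %[mod r1])%N -> (a <= k)%N)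
  (alpha : L) (Halpha : ((q ^ m).-1).-primitive_root alpha)
  (T : 'Z_((q ^ m).-1) -> 'Z_r1 * 'Z_r2)
  (HTadd : forall x y, T (x + y) = T x + T y)
  (HTbij : bijective T) :
  let TinvGamma := [set i : 'Z_((q ^ m).-1) |
                      ((T i).1 < a)%N && ((T i).2 < m %/ a)%N] in
  info_set q (RM_code L q m 1)
    (0 |: [set alpha ^+ (nat_of_ord i) | i in TinvGamma])
  /\
  info_set q (RM_code L q m (m * (q - 1) - 2))
    [set alpha ^+ (nat_of_ord i) | i in ~: TinvGamma].
Proof.
move=> TinvGamma.
have [p [k [pp k0 qE]]] := Hq.
have pcp : p \in [pchar L].
  apply: (card_finPcharP (n := (k * m)%N)) => //.
  by rewrite HL qE expnM.
have Tinj : injective T := bij_inj HTbij.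
have Tsurj : forall y, exists x, T x = y.
  by case: HTbij => Ti _ hTi y; exists (Ti y); rewrite hTi.
have [e1 He1] := Tsurj (1, 0).
have [e2 He2] := Tsurj (0, 1).
split.
  exact: (part1 pcp k0 qE Hm HL Halpha Hn Hr1 Hr2 Hcop Ha0 Ha1 Hamin HTadd Tinj Tsurj He1 He2).
exact: (part2 pcp k0 qE Hm HL Halpha Hn Hr1 Hr2 Hcop Ha0 Ha1 Hamin HTadd Tinj Tsurj He1 He2).
Qed.
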